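(* Suppose Assumptions (A1), (A2), (A3) and (LIN) hold, and let $x\in\mathcal{X}$ be such that $y^*(x)$ is a single point. Then for every $i\in\{1,\dots,k\}$, $\displaystyle\lim_{t\to0^+}\frac{t}{-h_i(x,y_t^*(x))}=\lambda_i(x)$.
   Context: Let $f,g,h_1,\dots,h_k:\mathbb{R}^n\times\mathbb{R}^m\to\mathbb{R}$ and $\mathcal{X}\subseteq\mathbb{R}^n$. For $x\in\mathcal{X}$ let $\mathcal{Y}(x)=\{y: h_i(x,y)\le 0,\ i=1,\dots,k\}$ and $y^*(x)=\arg\min_{y\in\mathcal{Y}(x)} g(x,y)$. For $t>0$ let $\widetilde g_t(x,y)=g(x,y)-t\sum_{i=1}^k\log(-h_i(x,y))$ (defined when all $h_i(x,y)<0$) and $y_t^*(x)=\arg\min_y\widetilde g_t(x,y)$. $\lambda_i(x)\ge0$ denotes the optimal KKT multiplier of the $i$-th constraint of the lower-level problem at $y^*(x)$. Assumptions: (A1) $f$ once and $g,h_i$ twice continuously differentiable; (A2) $\mathcal{X}$ convex and compact and for every $x\in\mathcal{X}$ there is $y$ with $h_i(x,y)<0$ for all $i$; (A3) (LICQ) for every $x\in\mathcal{X}$ and $y\in y^*(x)$, $\{\nabla_y h_i(x,y): h_i(x,y)=0\}$ is linearly independent; (LIN) for every $x\in\mathcal{X}$, $g(x,\cdot)$ and all $h_i(x,\cdot)$ are linear (affine) in $y$ and $\mathcal{Y}(x)$ is compact. *)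

(* Defs.v *)
From mathcomp Require Import all_boot all_order all_algebra.
From mathcomp Require Import all_classical all_reals all_analysis.
Set Implicit Arguments. Unset Strict Implicit. Unset Printing Implicit Defensive.
Import Order.TTheory GRing.Theory Num.Theory.
Import numFieldNormedType.Exports.
Local Open Scope classical_set_scope.
Local Open Scope ring_scope.

(* continuously differentiable on the whole (finite-dimensional) space:
   differentiable everywhere, and every directional derivative is continuous
   (in finite dimension this is continuity of the derivative). *)
Definition C1 (R : realType) (V : normedModType R) (F : V -> R) : Prop :=
  (forall p, differentiable F p) /\ (forall v : V, continuous (fun p => 'D_v F p)).

Definition C2 (R : realType) (V : normedModType R) (F : V -> R) : Prop :=
  C1 F /\ (forall v : V, C1 (fun p => 'D_v F p)).

Definition uncurryF (R : realType) (n m : nat) (F : 'rV[R]_n -> 'rV[R]_m -> R)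
  : 'rV[R]_n * 'rV[R]_m -> R := fun p => F p.1 p.2.

Definition convex_setR (R : realType) (n : nat) (X : set 'rV[R]_n) : Prop :=
  forall a b (t : R), X a -> X b -> 0 <= t -> t <= 1 ->
    X (t *: a + (1 - t) *: b).

Definition affine (R : realType) (m : nat) (F : 'rV[R]_m -> R) : Prop :=
  exists (a : 'rV[R]_m) (c : R), forall y, F y = \sum_(j < m) a 0 j * y 0 j + c.

Definition Yset (R : realType) (n m k : nat)
  (h : 'I_k -> 'rV[R]_n -> 'rV[R]_m -> R) (x : 'rV[R]_n) : set 'rV[R]_m :=
  [set y | forall i, h i x y <= 0].

Definition ystar (R : realType) (n m k : nat) (g : 'rV[R]_n -> 'rV[R]_m -> R)
  (h : 'I_k -> 'rV[R]_n -> 'rV[R]_m -> R) (x : 'rV[R]_n) : set 'rV[R]_m :=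
  [set y | Yset h x y /\ forall z, Yset h x z -> g x y <= g x z].

Definition barrier (R : realType) (n m k : nat) (g : 'rV[R]_n -> 'rV[R]_m -> R)
  (h : 'I_k -> 'rV[R]_n -> 'rV[R]_m -> R) (t : R) (x : 'rV[R]_n) (y : 'rV[R]_m) : R :=
  g x y - t * \sum_(i < k) ln (- h i x y).

Definition is_barrier_min (R : realType) (n m k : nat) (g : 'rV[R]_n -> 'rV[R]_m -> R)
  (h : 'I_k -> 'rV[R]_n -> 'rV[R]_m -> R) (t : R) (x : 'rV[R]_n) (y : 'rV[R]_m) : Prop :=
  (forall i, h i x y < 0) /\
  (forall z, (forall i, h i x z < 0) -> barrier g h t x y <= barrier g h t x z).

Definition LICQ (R : realType) (n m k : nat)
  (h : 'I_k -> 'rV[R]_n -> 'rV[R]_m -> R) (x : 'rV[R]_n) (y : 'rV[R]_m) : Prop :=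
  forall c : 'I_k -> R,
    (forall i, h i x y != 0 -> c i = 0) ->
    (forall v : 'rV[R]_m, \sum_(i < k) c i * 'D_v (h i x) y = 0) ->
    forall i, c i = 0.

Definition KKT_mult (R : realType) (n m k : nat) (g : 'rV[R]_n -> 'rV[R]_m -> R)
  (h : 'I_k -> 'rV[R]_n -> 'rV[R]_m -> R) (x : 'rV[R]_n) (y : 'rV[R]_m)
  (lam : 'I_k -> R) : Prop :=
  (forall i, 0 <= lam i) /\
  (forall i, lam i * h i x y = 0) /\
  (forall v : 'rV[R]_m, 'D_v (g x) y + \sum_(i < k) lam i * 'D_v (h i x) y = 0).

(* Main.v *)
Require Import Defs.
From mathcomp Require Import all_boot all_order all_algebra.
From mathcomp Require Import all_classical all_reals all_analysis.
From mathcomp Require Import ring lra.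
Set Implicit Arguments. Unset Strict Implicit. Unset Printing Implicit Defensive.
Import Order.TTheory GRing.Theory Num.Theory.
Import numFieldNormedType.Exports.
Local Open Scope classical_set_scope.
Local Open Scope ring_scope.
Section H.
Variable R : realType.
Definition dot (m : nat) (u v : 'rV[R]_m) : R := \sum_(j < m) u 0 j * v 0 j.

Lemma dotDr m (a u v : 'rV[R]_m) : dot a (u + v) = dot a u + dot a v.
Proof. by rewrite /dot -big_split /=; apply: eq_bigr => j _; rewrite !mxE mulrDr. Qed.

Lemma dotZr m (a v : 'rV[R]_m) (s : R) : dot a (s *: v) = s * dot a v.
Proof. by rewrite /dot mulr_sumr; apply: eq_bigr => j _; rewrite !mxE mulrCA. Qed.

Lemma dotNr m (a v : 'rV[R]_m) : dot a (- v) = - dot a v.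
Proof. by rewrite -scaleN1r dotZr mulN1r. Qed.

Lemma ln_term (t s w d : R) : 0 < t -> 0 < s -> 0 < w -> w / 2 <= w - s * d ->
  t * (ln w - ln (w - s * d)) <= s * (t / w * d + s * (2 * t * d ^+ 2 / w ^+ 2)).
Proof.
move=> t0 s0 w0 hp; set p := w - s * d in hp *.
have p0 : 0 < p by apply: lt_le_trans hp; rewrite divr_gt0.
have wp0 : 0 < w / p by rewrite divr_gt0.
have H1 : ln w - ln p <= s * d / p.
  rewrite -ln_div ?posrE //.
  have -> : s * d / p = w / p - 1 by rewrite /p; field; rewrite gt_eqF.
  have := @le_ln1Dx R (w / p - 1); rewrite addrCA subrr addr0; apply.

  by rewrite ltrBrDl subrr.
apply: le_trans (_ : t * (s * d / p) <= _); first by rewrite ler_pM2l.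
have -> : t * (s * d / p) = s * (t / w * d) + (t * s ^+ 2 * d ^+ 2 / w) * p^-1.
  by rewrite /p; field; rewrite !gt_eqF.
rewrite mulrDr lerD2l.
have X0 : 0 <= t * s ^+ 2 * d ^+ 2 / w.
  apply: divr_ge0 (ltW w0); apply: mulr_ge0; [apply: mulr_ge0; [exact: ltW|exact: sqr_ge0]|exact: sqr_ge0].
have Hi : p^-1 <= 2 / w.
  have -> : 2 / w = (w / 2)^-1 by rewrite invf_div.
  by rewrite lef_pV2 ?posrE ?divr_gt0.
apply: le_trans (ler_wpM2l X0 Hi) _.
rewrite le_eqVlt; apply/orP; left; apply/eqP; field; rewrite gt_eqF //.
Qed.

Lemma term_le k (F : 'I_k -> R) i : (forall j, 0 <= F j) -> F i <= \sum_j F j.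
Proof.
move=> F0; rewrite (bigD1 i) //= ler_wpDr //; exact: sumr_ge0.
Qed.

Lemma stat m k (a : 'rV[R]_m) (b : 'I_k -> 'rV[R]_m) (G : 'rV[R]_m -> R)
  (H : 'I_k -> 'rV[R]_m -> R) (c0 : R) (cs : 'I_k -> R) t y :
  (forall z, G z = dot a z + c0) -> (forall i z, H i z = dot (b i) z + cs i) -> 0 < t ->
  (forall i, H i y < 0) ->
  (forall z, (forall i, H i z < 0) ->
     G y - t * \sum_(i < k) ln (- H i y) <= G z - t * \sum_(i < k) ln (- H i z)) ->
  forall v, dot a v + \sum_i t / (- H i y) * dot (b i) v = 0.
Proof.
move=> HG HH t0 Hy Hmin.
have w0 : forall i, 0 < - H i y by move=> i; rewrite oppr_gt0.
suff P : forall v, 0 <= dot a v + \sum_i t / (- H i y) * dot (b i) v.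
  move=> v; apply/eqP; rewrite eq_le P andbT.
  have := P (- v); rewrite dotNr.
  under eq_bigr do rewrite dotNr mulrN.
  by rewrite sumrN -opprD oppr_ge0.
move=> v.
set w := fun i => - H i y.
set d := fun i => dot (b i) v.
set M := 1 + \sum_i `|d i| / w i.
set C := \sum_i (2 * t * d i ^+ 2 / w i ^+ 2).
have M1 : 1 <= M.
  rewrite lerDl; apply: sumr_ge0 => i _; apply: divr_ge0 => //; exact: ltW (w0 i).
have M0 : 0 < M by apply: lt_le_trans M1.
have C0 : 0 <= C.
  apply: sumr_ge0 => i _; apply: divr_ge0; last exact: sqr_ge0.
  apply: mulr_ge0; last exact: sqr_ge0.
  by apply: mulr_ge0 => //; exact: ltW.
apply/ler_addgt0Pr => e e0.
set s := Num.min (M^-1 / 2) (e / (C + 1)).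
have s0 : 0 < s by rewrite lt_min !divr_gt0 ?invr_gt0 // ltr_wpDl.
have sM : s * M <= 1 / 2.
  have : s <= M^-1 / 2 by rewrite ge_min lexx.
  move=> /(ler_wpM2r (ltW M0)) H1; apply: le_trans H1 _.
  by rewrite mulrAC mulVf ?gt_eqF.
have sC : s * C <= e.
  have : s <= e / (C + 1) by rewrite ge_min lexx orbT.
  move=> /(ler_wpM2r C0) H1; apply: le_trans H1 _.
  have C10 : 0 < C + 1 by rewrite ltr_wpDl.
  by rewrite -mulrA ler_piMr ?ltW // mulrC ltr_pdivrMr // mul1r ltrDl.
have hp : forall i, w i / 2 <= w i - s * d i.
  move=> i.
  have : `|d i| / w i <= M.
    rewrite /M addrC ler_wpDr //; apply: (@term_le k (fun j => `|d j| / w j) i) => j.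
    by apply: divr_ge0 => //; exact: ltW (w0 j).
  rewrite ler_pdivrMr; last exact: w0 i. move=> HdM.
  have : s * `|d i| <= w i / 2.
    apply: le_trans (_ : s * (M * w i) <= _); first by rewrite ler_wpM2l // ltW.
    by rewrite mulrA; apply: le_trans (ler_wpM2r (ltW (w0 i)) sM) _; rewrite mulrC mul1r.
  have := ler_norm (d i); move=> Hn Hs.
  have : s * d i <= s * `|d i| by rewrite ler_wpM2l // ltW.
  move: (w0 i); rewrite -/(w i) => wi0.
  lra.
have key : 0 <= s * (dot a v + \sum_i t / w i * d i + s * C).
  have Hz : forall i, - H i (y + s *: v) = w i - s * d i.
    by move=> i; rewrite /w /d /= !HH dotDr dotZr; ring.
  have Hin : forall i, H i (y + s *: v) < 0.
    move=> i; rewrite -oppr_gt0 Hz; have := hp i; move: (w0 i); rewrite -/(w i).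
    move=> wi0; lra.
  have HGz : G (y + s *: v) = G y + s * dot a v by rewrite !HG dotDr dotZr; ring.
  have := Hmin _ Hin; rewrite HGz => Hm.
  have E1 : \sum_i t * (ln (w i) - ln (w i - s * d i)) <= s * (\sum_i t / w i * d i + s * C).
    rewrite /C mulr_sumr -big_split mulr_sumr; apply: ler_sum => i _.
    by apply: ln_term => //; exact: w0 i.
  have E2 : 0 <= s * dot a v + \sum_i t * (ln (w i) - ln (w i - s * d i)).
    under eq_bigr do rewrite mulrBr.
    rewrite sumrB -!mulr_sumr.
    have -> : \sum_i ln (w i - s * d i) = \sum_(i < k) ln (- H i (y + s *: v)).
      by apply: eq_bigr => i _; rewrite Hz.
    have -> : \sum_i ln (w i) = \sum_(i < k) ln (- H i y) by [].
    lra.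
  rewrite -addrA mulrDr; lra.
have := key; rewrite pmulr_rge0 // => key'.
lra.
Qed.

Lemma D_affine m (F : 'rV[R]_m -> R) a c :
  (forall y, F y = dot a y + c) -> forall v p, 'D_v F p = dot a v.
Proof.
move=> HF v p; rewrite /derive; apply: cvg_lim => //.
apply: cvg_near_cst; near=> s.
have sn0 : s != 0 by near: s; exact: nbhs_dnbhs_neq.
rewrite /= !HF dotDr dotZr.
have -> : s * dot a v + dot a p + c - (dot a p + c) = s * dot a v by ring.
rewrite -[_ *: _]/(s^-1 * _) mulrA mulVf // mul1r.

Unshelve. all: by end_near.
Qed.



Lemma sqsum0 n (u : 'rV[R]_n) : (u *m u^T) 0 0 = \sum_l u 0 l ^+ 2.
Proof. by rewrite mxE; apply: eq_bigr => l _; rewrite mxE. Qed.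

Lemma dual m k (b : 'I_k -> 'rV[R]_m) (A : pred 'I_k) :
  (forall c : 'I_k -> R, (forall i, ~~ A i -> c i = 0) ->
     (forall l, \sum_i c i * b i 0 l = 0) -> forall i, c i = 0) ->
  exists V : 'I_k -> 'rV[R]_m, forall j i, A i -> dot (b i) (V j) = (i == j)%:R.
Proof.
move=> Hli.
pose N : 'M[R]_(k, m) := \matrix_(i, l) ((A i)%:R * b i 0 l).
pose e : 'rV[R]_k := \row_i (~~ A i)%:R.
pose E : 'M[R]_k := diag_mx e.
pose Q := N *m N^T + E.
have Qu : Q \in unitmx.
  rewrite -row_free_unit -kermx_eq0; apply/eqP/row_matrixP => r; rewrite row0.
  set c := row r (kermx Q).
  have cQ : c *m Q = 0 by apply/sub_kermxP; rewrite row_sub.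
  clearbody c.
  have : (c *m Q *m c^T) 0 0 = 0 by rewrite cQ mul0mx mxE.
  rewrite mulmxDr mulmxDl.
  have -> : c *m (N *m N^T) *m c^T = (c *m N) *m (c *m N)^T by rewrite trmx_mul !mulmxA.
  rewrite mxE sqsum0 mxE.
  under [X in _ + X]eq_bigr do rewrite mul_mx_diag !mxE mulrC mulrA -expr2.
  move=> /eqP; rewrite paddr_eq0; first last.
  - by apply: sumr_ge0 => i _; rewrite mulr_ge0 ?ler0n ?sqr_ge0.
  - by apply: sumr_ge0 => i _; exact: sqr_ge0.
  move=> /andP[/eqP S1 /eqP S2].
  have nn2 : forall j, true -> 0 <= c 0 j ^+ 2 * (~~ A j)%:R.
    by move=> j _; rewrite mulr_ge0 ?ler0n ?sqr_ge0.
  have nn1 : forall j, true -> 0 <= (c *m N) 0 j ^+ 2 by move=> j _; exact: sqr_ge0.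
  have cA : forall i, ~~ A i -> c 0 i = 0.
    move=> i Ai; have := @psumr_eq0P _ _ _ _ nn2 S2 i isT.
    by rewrite Ai mulr1 => /eqP; rewrite sqrf_eq0 => /eqP.
  have Hc := Hli (fun i => c 0 i) cA.
  apply/rowP => i; rewrite mxE; apply: Hc => l.
  have /eqP := @psumr_eq0P _ _ _ _ nn1 S1 l isT.
  rewrite sqrf_eq0 mxE => /eqP E0; apply: etrans E0; apply: eq_bigr => i' _; rewrite mxE.
  case: (boolP (A i')) => Ai' /=; first by rewrite mul1r.
  by rewrite cA // !mul0r.
pose V0 := N^T *m invmx Q.
have NV : N *m V0 = 1%:M - E *m invmx Q.
  rewrite /V0 mulmxA.
  have -> : N *m N^T = Q - E by rewrite /Q addrK.
  by rewrite mulmxBl mulmxV.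
exists (fun j => \row_l V0 l j) => j i Ai.
have := congr1 (fun M : 'M[R]_k => M i j) NV.
rewrite !mxE [X in _ - X]big1 ?subr0; last first.
  by move=> l _; rewrite /E !mxE Ai mul0rn mul0r.
rewrite /dot => <-.
by apply: eq_bigr => l _; rewrite !mxE Ai mul1r.
Qed.
End H.


Lemma lim_from_bound (R : realType) (f : R -> R) l C : 0 <= C ->
  (forall t, 0 < t -> `|l - f t| <= C * t) -> f @ 0^'+ --> l.
Proof.
move=> C0 H; apply/cvgrPdist_le => e e0.
have C10 : 0 < C + 1 by rewrite ltr_wpDl.
near=> t.
have t0 : 0 < t by near: t; exact: nbhs_right_gt.
have te : t < e / (C + 1) by near: t; apply: nbhs_right_lt; rewrite divr_gt0.
apply: le_trans (H t t0) _.
have : C * t <= C * (e / (C + 1)) by rewrite ler_wpM2l // ltW.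
move=> /le_trans; apply.
rewrite mulrA ler_pdivrMr // mulrC ler_pM2l //; lra.
Unshelve. all: by end_near.
Qed.

Theorem lemma13 (R : realType) (n m k : nat)
  (f g : 'rV[R]_n -> 'rV[R]_m -> R) (h : 'I_k -> 'rV[R]_n -> 'rV[R]_m -> R)
  (X : set 'rV[R]_n)
  (* (A1) *)
  (A1f : C1 (uncurryF f)) (A1g : C2 (uncurryF g)) (A1h : forall i, C2 (uncurryF (h i)))
  (* (A2) *)
  (A2conv : convex_setR X) (A2comp : compact X)
  (A2slater : forall x, X x -> exists y, forall i, h i x y < 0)
  (* (A3) LICQ *)
  (A3 : forall x y, X x -> ystar g h x y -> LICQ h x y)
  (* (LIN) *)
  (LINg : forall x, X x -> affine (g x))
  (LINh : forall x, X x -> forall i, affine (h i x))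
  (LINcomp : forall x, X x -> compact (Yset h x))
  (x : 'rV[R]_n) (xX : X x)
  (ys : 'rV[R]_m) (ys_unique : ystar g h x = [set ys])
  (lam : 'I_k -> R) (lamKKT : KKT_mult g h x ys lam)
  (yt : R -> 'rV[R]_m) (ytmin : forall t, 0 < t -> is_barrier_min g h t x (yt t)) :
  forall i : 'I_k,
    (fun t => t / (- h i x (yt t))) @ 0^'+ --> lam i.
Proof.
have ysS : ystar g h x ys by rewrite ys_unique.
have [ysY _] := ysS.
have [a [c0 Ha]] := LINg x xX.
have : forall i, exists p : 'rV[R]_m * R, forall y, h i x y = dot p.1 y + p.2.
  by move=> i; have [bi [ci Hi]] := LINh x xX i; exists (bi, ci).
move=> /choice [bc Hbc].
pose b i := (bc i).1; pose cs i := (bc i).2.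
have hG : forall z, g x z = dot a z + c0 by [].
have hH : forall i z, h i x z = dot (b i) z + cs i by move=> i z; exact: Hbc.
have Dg : forall v p, 'D_v (g x) p = dot a v := D_affine hG.
have Dh : forall i v p, 'D_v (h i x) p = dot (b i) v := fun i => D_affine (hH i).
pose mu t i := t / (- h i x (yt t)).
have st : forall t, 0 < t -> forall v, dot a v + \sum_i mu t i * dot (b i) v = 0.
  move=> t t0; have [Hin Hmin] := ytmin t t0.
  exact: (stat hG hH t0 Hin Hmin).
have [lam0 [lamc lamst]] := lamKKT.
have lst : forall v, dot a v + \sum_i lam i * dot (b i) v = 0.
  move=> v; rewrite -[RHS](lamst v) Dg; congr (_ + _).
  by apply: eq_bigr => i _; rewrite Dh.
have diff : forall t, 0 < t -> forall v, \sum_i (mu t i - lam i) * dot (b i) v = 0.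
  move=> t t0 v; have := st t t0 v; rewrite -[RHS](lst v) => /addrI E.
  by under eq_bigr do rewrite mulrBl; rewrite sumrB E subrr.
have hyt : forall t, 0 < t -> forall i, h i x (yt t) < 0.
  by move=> t t0; have [] := ytmin t t0.
have mu0 : forall t, 0 < t -> forall i, 0 < mu t i.
  by move=> t t0 i; rewrite /mu divr_gt0 // oppr_gt0 hyt.
have muh : forall t, 0 < t -> forall i, mu t i * h i x (yt t) = - t.
  move=> t t0 i; rewrite /mu; have := hyt t t0 i => hn.
  by field; rewrite lt_eqF.
have comp : forall t, 0 < t ->
    \sum_i (mu t i * (- h i x ys) + lam i * (- h i x (yt t))) = k%:R * t.
  move=> t t0.
  have E := diff t t0 (yt t - ys).
  apply/eqP; rewrite -subr_eq0; apply/eqP.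
  have -> : k%:R * t = \sum_(i < k) t by rewrite sumr_const card_ord mulr_natl.
  rewrite -sumrB -[RHS]E; apply: eq_bigr => i _.
  have -> : dot (b i) (yt t - ys) = h i x (yt t) - h i x ys.
    by rewrite dotDr dotNr !hH; ring.
  have := muh t t0 i; have := lamc i.
  rewrite !mulrN mulrBl !mulrBr => -> ->; lra.
have binact : forall t, 0 < t -> forall i, mu t i * (- h i x ys) <= k%:R * t.
  move=> t t0 i; rewrite -(comp t t0).
  have nn : forall j, 0 <= mu t j * (- h j x ys) + lam j * (- h j x (yt t)).
    move=> j; apply: addr_ge0; apply: mulr_ge0.
    - exact: ltW (mu0 t t0 j).
    - by rewrite oppr_ge0.
    - exact: lam0.
    - by rewrite oppr_ge0 ltW // hyt.
  apply: le_trans (@term_le R k _ i nn).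
  rewrite lerDl; apply: mulr_ge0; first exact: lam0.
  by rewrite oppr_ge0 ltW // hyt.
have [V HV] : exists V : 'I_k -> 'rV[R]_m,
    forall j i, h i x ys == 0 -> dot (b i) (V j) = (i == j)%:R.
  apply: (@dual R m k b (fun i => h i x ys == 0)) => c Hc Hl.
  apply: (A3 x ys xX ysS c) => [i /Hc //|v].
  under eq_bigr do rewrite Dh.
  rewrite /dot; under eq_bigr do rewrite mulr_sumr.
  rewrite exchange_big /=; apply: big1 => l _.
  under eq_bigr do rewrite mulrA.
  by rewrite -mulr_suml Hl mul0r.
move=> i0.
case: (boolP (h i0 x ys == 0)) => A0; last first.
  have l0 : lam i0 = 0.
    by have /eqP := lamc i0; rewrite mulf_eq0 (negbTE A0) orbF => /eqP.
  have hn : 0 < - h i0 x ys by rewrite oppr_gt0 lt_neqAle A0 ysY.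
  apply: (@lim_from_bound R _ _ (k%:R / (- h i0 x ys))); first by rewrite divr_ge0 // ltW.
  move=> t t0; rewrite l0 sub0r normrN ger0_norm; last exact: ltW (mu0 t t0 i0).
  rewrite mulrAC ler_pdivlMr //; exact: binact.
pose d i := dot (b i) (V i0).
pose K i := if h i x ys == 0 then 0 else k%:R / (- h i x ys) * `|d i|.
have K0 : forall i, 0 <= K i.
  move=> i; rewrite /K; case: ifP => // /negbT Ai.
  have hn : 0 < - h i x ys by rewrite oppr_gt0 lt_neqAle Ai ysY.
  by rewrite mulr_ge0 // divr_ge0 // ltW.
apply: (@lim_from_bound R _ _ (\sum_i K i)); first exact: sumr_ge0.
move=> t t0.
have tb : forall i, i != i0 -> `|(mu t i - lam i) * d i| <= t * K i.
  move=> i ni; rewrite /K; case: ifP => Ai.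
    by rewrite /d HV // (negbTE ni) mulr0 normr0 mulr0.
  have hn : 0 < - h i x ys by rewrite oppr_gt0 lt_neqAle Ai ysY.
  have l0 : lam i = 0.
    by have /eqP := lamc i; rewrite mulf_eq0 Ai orbF => /eqP.
  rewrite l0 subr0 normrM ger0_norm; last exact: ltW (mu0 t t0 i).
  apply: le_trans (_ : mu t i * `|d i| <= (k%:R * t / - h i x ys) * `|d i|) _.
    by rewrite ler_wpM2r // ler_pdivlMr //; exact: binact.
  rewrite le_eqVlt; apply/orP; left; apply/eqP; by field; rewrite Ai.
have E := diff t t0 (V i0).
rewrite (bigD1 i0) //= -/(d i0) /d HV // eqxx mulr1 in E.
have -> : lam i0 - t / - h i0 x (yt t) =
    \sum_(i | i != i0) (mu t i - lam i) * dot (b i) (V i0).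
  by move: E; rewrite /mu; lra.
apply: le_trans (ler_norm_sum _ _ _) _.
rewrite [\sum_i K i](bigD1 i0) //= {1}/K A0 add0r mulr_suml.
apply: ler_sum => i ni; rewrite [K i * t]mulrC; exact: tb.
Qed.
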